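(* Let $M,N\in\mathbb{N}^*$ and let $F$ be a set of $M+1$ points of $[0,1]$ whose elements satisfy $\rho_0=0<\rho_1<\dots<\rho_M=1$. Let $X(1/N)=\{t\in\,]0,1]:\ ]t-1/N,t]\cap F=\emptyset\}$. Then \[ \mathrm{card}\Big\{j\in\{1,\dots,N\}:\ \Big]\frac{j-1}{N},\frac jN\Big]\cap F=\emptyset\Big\} = N\,\mathrm{mes}\big(X(1/N)\big)+\sum_{\substack{1\le i\le M\\ \rho_i-\rho_{i-1}\ge 1/N}}\big(\{-N\rho_i\}-\{-N\rho_{i-1}\}\big). \]
   Context: $\mathrm{mes}$ denotes Lebesgue measure and $\{x\}$ the fractional part of the real number $x$. *)

(* Defs.v *)
From HB Require Import structures.
From mathcomp Require Import all_boot all_order all_algebra.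
From mathcomp Require Import all_classical all_reals all_analysis.
Set Implicit Arguments. Unset Strict Implicit. Unset Printing Implicit Defensive.
Import Order.TTheory GRing.Theory Num.Theory.
Local Open Scope ring_scope.
Local Open Scope classical_set_scope.

Definition fracpart {R : realType} (x : R) : R := x - (Num.floor x)%:~R.

Definition ptset {R : realType} (M : nat) (rho : nat -> R) : set R :=
  [set x | exists2 i, (i <= M)%N & x = rho i].

Definition ocI {R : realType} (a b : R) : set R := [set x | a < x <= b].

Definition Xset {R : realType} (N : nat) (F : set R) : set R :=
  [set t | ocI 0 1 t /\ ocI (t - N%:R^-1) t `&` F = set0].

(* Main.v *)
Require Import Defs.
From HB Require Import structures.
From mathcomp Require Import all_boot all_order all_algebra.
From mathcomp Require Import all_classical all_reals all_analysis.
From mathcomp Require Import lra zify.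
Import Order.TTheory GRing.Theory Num.Theory.
Local Open Scope ring_scope.
Local Open Scope classical_set_scope.

Lemma rho_le (R : realType) M (rho : nat -> R)
  (hinc : forall i, (i < M)%N -> rho i < rho i.+1) k l :
  (k <= l)%N -> (l <= M)%N -> rho k <= rho l.
Proof.
move=> kl lM; elim: l kl lM => [|l IH]; first by rewrite leqn0 => /eqP ->.
rewrite leq_eqVlt ltnS => /orP [/eqP -> //| kl] lM.
apply: le_trans (IH kl (ltnW lM)) _; exact/ltW/hinc.
Qed.

Lemma gap_iff (R : realType) M (rho : nat -> R) (h0 : rho 0%N = 0) (hMM : rho M = 1)
  (hinc : forall i, (i < M)%N -> rho i < rho i.+1) (lo hi : R) :
  lo < hi -> 0 < hi -> hi <= 1 ->
  (ocI lo hi `&` ptset M rho = set0) <->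
  (exists2 i, (i < M)%N & (rho i <= lo) && (hi < rho i.+1)).
Proof.
move=> lohi hi0 hi1; split.
- move=> H.
  have ex : exists k, (hi <= rho k) && (k <= M)%N by exists M; rewrite hMM hi1 leqnn.
  case: (ex_minnP ex) => k /andP[hk kM] mink.
  have k0 : (0 < k)%N.
    rewrite lt0n; apply/eqP => k0; move: hk; rewrite k0 h0; lra.
  have notin : forall x, ocI lo hi x -> ptset M rho x -> False.
    move=> x hx px; have : (ocI lo hi `&` ptset M rho) x by split.
    by rewrite H.
  exists k.-1; first lia.
  have hkm1 : rho k.-1 < hi.
    rewrite ltNge; apply/negP => hle.
    have := mink k.-1; rewrite hle /= (leq_trans (leq_pred k) kM) => /(_ isT); lia.
  apply/andP; split.
  + rewrite leNgt; apply/negP => lt.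
    apply: (notin (rho k.-1)); last by exists k.-1 => //; lia.
    rewrite /ocI /= lt /=; exact: ltW.
  + rewrite prednK //; rewrite lt_neqAle hk andbT.
    apply/negP => /eqP e; apply: (notin (rho k)); last by exists k.
    by rewrite /ocI /= -e lohi lexx.
- case=> i iM /andP[hl hh]; apply/seteqP; split => x //= [/andP [lx xh]] [k kM ek].
  rewrite {}ek in lx xh.
  case: (leqP k i) => ki.
    have := @rho_le _ _ _ hinc _ _ ki (ltnW iM); lra.
  have := @rho_le _ _ _ hinc _ _ ki kM; lra.
Qed.

Lemma gap_uniq (R : realType) M (rho : nat -> R)
  (hinc : forall i, (i < M)%N -> rho i < rho i.+1) (lo hi : R) :
  lo < hi -> forall i j, (i < M)%N -> (j < M)%N ->
  (rho i <= lo) && (hi < rho i.+1) -> (rho j <= lo) && (hi < rho j.+1) -> i = j.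
Proof.
move=> lohi i j iM jM /andP[h1 h2] /andP[h3 h4].
case: (ltngtP i j) => // ij; exfalso.
  have := @rho_le _ _ _ hinc _ _ ij (ltnW jM); lra.
have := @rho_le _ _ _ hinc _ _ ij (ltnW iM); lra.
Qed.
Lemma count_itv (n p q : nat) :
  (\sum_(j < n) ((p < j) && (j < q) : nat) = minn n q - p.+1)%N.
Proof.
elim: n => [|n IH]; first by rewrite big_ord0; lia.
rewrite big_ord_recr /= IH.
by have [?|?] := ltnP p n; have [?|?] := ltnP n q; simpl; lia.
Qed.

Lemma sum_unique (M : nat) (b : nat -> bool) (P : bool) :
  (P <-> exists2 i, (i < M)%N & b i) ->
  (forall i j, (i < M)%N -> (j < M)%N -> b i -> b j -> i = j) ->
  (P : nat) = (\sum_(i < M) (b i : nat))%N.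
Proof.
move=> hP hu; case: (boolP P) => HP.
  have [i0 i0M bi0] := (proj1 hP HP).
  rewrite (bigD1 (Ordinal i0M)) //= bi0 big1 // => k /negP nk.
  case bk: (b k) => //; exfalso; apply: nk; apply/eqP/val_inj => /=.
  exact: (hu _ _ (ltn_ord k) i0M bk bi0).
rewrite big1 // => k _; case bk: (b k) => //; move/negP: HP; case.
by apply/hP; exists k.
Qed.

Lemma per_i (R : realType) (N : nat) (x y : R) :
  0 <= x -> x <= y -> y <= N%:R ->
  ((\sum_(j < N.+1) ((x <= j%:R - 1)%R && (j%:R < y)%R : nat))%N%:R : R) =
  (if x + 1 < y then y - x - 1 else 0) +
  (if 1 <= y - x then fracpart (- y) - fracpart (- x) else 0).
Proof.
move=> x0 xy yN.
have p0 : (0 <= Num.ceil x)%R by rewrite ceil_ge0; lra.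
have qN : (Num.ceil y <= N%:Z)%R by rewrite ceil_le_int.
have [pn hp] : exists pn : nat, Num.ceil x = pn%:Z.
  by exists `|Num.ceil x|%N; rewrite gez0_abs.
have [qn hq] : exists qn : nat, Num.ceil y = qn%:Z.
  exists `|Num.ceil y|%N; rewrite gez0_abs //; apply: le_trans p0 _.
  exact: le_ceil.
have c1 (j : nat) : (x <= j%:R - 1) = (pn < j)%N.
  have -> : (j%:R - 1 : R) = (j%:Z - 1)%:~R by rewrite intrB.
  rewrite -ceil_le_int hp; apply/idP/idP; lia.
have c2 (j : nat) : (j%:R < y) = (j < qn)%N.
  have -> : (j%:R : R) = (j%:Z)%:~R by [].
  rewrite -ceil_gt_int hq; apply/idP/idP; lia.
rewrite (eq_bigr (fun j : 'I_N.+1 => ((pn < j) && (j < qn))%N : nat)); last first.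
  by move=> j _; rewrite c1 c2.
rewrite count_itv.
have qN' : (qn <= N)%N by move: qN; rewrite hq; lia.
have -> : minn N.+1 qn = qn by lia.
have fx : fracpart (- x) = pn%:R - x.
  by rewrite /fracpart floorNceil opprK hp intrN; lra.
have fy : fracpart (- y) = qn%:R - y.
  by rewrite /fracpart floorNceil opprK hq intrN; lra.
rewrite fx fy.
have := ceil_itv x; have := ceil_itv y; rewrite hp hq !intrB -!pmulrn => hy hx.
have hx' : pn%:R - 1 < x <= pn%:R := hx.
have hy' : qn%:R - 1 < y <= qn%:R := hy.
move/andP: hx' => [hx1 hx2]; move/andP: hy' => [hy1 hy2].
have h2 : y - x <= 1 -> (qn < pn.+2)%N.
  by move=> h; rewrite -(ltr_nat R) -addn2 natrD; lra.
case: (ltnP pn qn) => pq.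
  have pq' : pn%:R + 1 <= (qn%:R : R) by rewrite natr1 ler_nat.
  rewrite natrB // -addn1 natrD.
  case: ifP => c; case: ifP => d.
  - lra.
  - move/negbT: d; rewrite -ltNge => d; lra.
  - move/negbT: c; rewrite -leNgt => c; lra.
  - move/negbT: c; rewrite -leNgt => c.
    move/negbT: d; rewrite -ltNge => d.
    have := h2 ltac:(lra) => h3.
    have e : qn = pn.+1 by clear -pq h3; lia.
    rewrite e -natr1; lra.
rewrite (_ : (qn - pn.+1)%N = 0%N); last by clear -pq; lia.
have pq' : (qn%:R : R) <= pn%:R by rewrite ler_nat.
by case: (ltrP (x + 1) y) => c; case: (lerP 1 (y - x)) => d; lra.
Qed.

Theorem proposition4 (R : realType) (M N : nat) (rho : nat -> R)
  (hM : (0 < M)%N) (hN : (0 < N)%N)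
  (h0 : rho 0%N = 0) (hMM : rho M = 1)
  (hinc : forall i, (i < M)%N -> rho i < rho i.+1) :
  ((#|[set j : 'I_N.+1 | (0 < j)%N &&
        `[< ocI ((j%:R - 1) / N%:R) (j%:R / N%:R) `&` ptset M rho = set0 >]]|)%:R
    : R)%:E =
  (N%:R%:E * lebesgue_measure (Xset N (ptset M rho)) +
   (\sum_(1 <= i < M.+1 | N%:R^-1 <= rho i - rho i.-1)
       (fracpart (- (N%:R * rho i)) - fracpart (- (N%:R * rho i.-1))))%:E)%E.
Proof.
have Npos : (0 : R) < N%:R by rewrite ltr0n.
have Ni : (0 : R) < N%:R^-1 by rewrite invr_gt0.
have rho0 : forall i, (i <= M)%N -> 0 <= rho i.
  by move=> i iM; rewrite -h0; apply: (@rho_le _ _ _ hinc).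
have rho1 : forall i, (i <= M)%N -> rho i <= 1.
  by move=> i iM; rewrite -hMM; apply: (@rho_le _ _ _ hinc).
pose A i := `[rho i + N%:R^-1, rho i.+1[%classic.
have hX : Xset N (ptset M rho) = \big[setU/set0]_(i < M) A i.
  rewrite -bigcup_mkord; apply/seteqP; split => t.
  - case=> /andP[t0 t1] H.
    have lt : t - N%:R^-1 < t by lra.
    have [i iM /andP[h1 h2]] := (proj1 (@gap_iff R M rho h0 hMM hinc _ _ lt t0 t1) H).
    by exists i => //=; rewrite /A /= in_itv /=; apply/andP; split; lra.
  - case=> i iM; rewrite /A /= in_itv /= => /andP[h1 h2].
    have := rho0 i (ltnW iM); have := rho1 i.+1 iM => r1 r0.
    have t0 : 0 < t by lra.
    have t1 : t <= 1 by lra.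
    have lt : t - N%:R^-1 < t by lra.
    split; first by rewrite /ocI /= t0 t1.
    apply/(@gap_iff R M rho h0 hMM hinc _ _ lt t0 t1).
    by exists i => //; apply/andP; split; lra.
have mA : forall k, (k < M)%N -> measurable (A k) by move=> k _; exact: measurable_itv.
have tA : trivIset `I_M A.
  move=> i j iM jM [t [Ai Aj]]; move: Ai Aj; rewrite /A /= !in_itv /=.
  move=> /andP[a1 a2] /andP[b1 b2].
  have lt : t - N%:R^-1 < t by lra.
  by apply: (@gap_uniq R M rho hinc (t - N%:R^-1) t lt i j iM jM); apply/andP; split; lra.
have mU : measurable (\big[setU/set0]_(k < M) A k).
  by apply: bigsetU_measurable => k _; exact: measurable_itv.
pose m k := if rho k + N%:R^-1 < rho k.+1 then rho k.+1 - (rho k + N%:R^-1) else 0.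
have lebA k : lebesgue_measure (A k) = (m k)%:E.
  by rewrite /A lebesgue_measure_itv /= lte_fin /m; case: ifP.
rewrite hX (measure_semi_additive_ord_I lebesgue_measure mA tA mU).
rewrite (eq_bigr (fun k : 'I_M => (m k)%:E)); last by move=> k _; rewrite -lebA.
rewrite sumEFin -EFinM -EFinD; congr (_%:E).
pose c i (j : nat) := ((rho i <= (j%:R - 1) / N%:R) && (j%:R / N%:R < rho i.+1)).
have hc : #|[set j : 'I_N.+1 | (0 < j)%N &&
        `[< ocI ((j%:R - 1) / N%:R) (j%:R / N%:R) `&` ptset M rho = set0 >]]|
   = (\sum_(i < M) \sum_(j < N.+1) (c i j : nat))%N.
  rewrite -sum1_card big_mkcond /= [RHS]exchange_big /=.
  apply: eq_bigr => j _.
  rewrite (_ : (j \in _) = ((0 < j)%N && `[< ocI ((j%:R - 1) / N%:R) (j%:R / N%:R) `&` ptset M rho = set0 >])); last first.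
    by apply/idP/idP => H; [move: H; rewrite in_setE | rewrite in_setE].
  have jN : (j%:R : R) <= N%:R by rewrite ler_nat -ltnS.
  have lohi : ((j%:R - 1) / N%:R : R) < j%:R / N%:R by rewrite mulrBl mul1r; lra.
  have hi1 : (j%:R / N%:R : R) <= 1 by rewrite ler_pdivrMr // mul1r.
  set P := (_ && _).
  apply: (@sum_unique M (fun i => c i j) P); rewrite /P.
    split.
    - case/andP => j0 /asboolP H.
      have hi0 : 0 < (j%:R : R) / N%:R by rewrite divr_gt0 // ltr0n.
      exact: (proj1 (@gap_iff R M rho h0 hMM hinc _ _ lohi hi0 hi1) H).
    - case=> i iM /andP[h1 h2].
      have hi0 : 0 < (j%:R : R) / N%:R by have := rho0 i (ltnW iM); lra.
      have j0 : (0 < j)%N.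
        by move: hi0; rewrite pmulr_lgt0 ?invr_gt0 // ltr0n.
      rewrite j0 /=; apply/asboolP.
      apply/(@gap_iff R M rho h0 hMM hinc _ _ lohi hi0 hi1).
      by exists i => //; apply/andP.
  by move=> i k iM kM; exact: (@gap_uniq R M rho hinc _ _ lohi).
rewrite hc natr_sum big_add1 /= big_mkord mulr_sumr [X in _ + X]big_mkcond /= -big_split /=.
apply: eq_bigr => i _.
have iM := ltn_ord i.
have ra := rho0 i (ltnW iM); have rb := rho1 i.+1 iM.
have hab := hinc i iM.
rewrite (eq_bigr (fun j : 'I_N.+1 => ((N%:R * rho i <= j%:R - 1)%R &&
   (j%:R < N%:R * rho i.+1)%R : nat))); last first.
  by move=> j _; rewrite /c ler_pdivlMr // ltr_pdivrMr // [rho i * _]mulrC [rho i.+1 * _]mulrC.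
rewrite per_i; first last.
- by rewrite -[X in _ <= X]mulr1 ler_pM2l.
- by rewrite ler_pM2l //; exact: ltW.
- exact: mulr_ge0 (ltW Npos) ra.
have e1 : (rho i + N%:R^-1 < rho i.+1) = (N%:R * rho i + 1 < N%:R * rho i.+1).
  by rewrite -(ltr_pM2l Npos) mulrDr mulfV // gt_eqF.
have e2 : (N%:R^-1 <= rho i.+1 - rho i) = (1 <= N%:R * rho i.+1 - N%:R * rho i).
  by rewrite -(ler_pM2l Npos) mulrBr mulfV // gt_eqF.
rewrite /m e1 e2; congr (_ + _); case: ifP => _; last by rewrite mulr0.
rewrite mulrBr mulrDr mulfV ?gt_eqF //; lra.
Qed.
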